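(* Let $\Delta$ be a simplicial complex on $[n]$ with $\dim\Delta\le n-3$, and let $U_{\bar\sigma}$ be a subspace in $L_\Delta$ for some face $\sigma$ of $\Delta$, where $\bar\sigma=[n]-\sigma$. Then the lower interval $[\hat0,U_{\bar\sigma}]$ of $L_\Delta$ is isomorphic to the intersection lattice of the diagonal arrangement $\mathcal{A}_{\mathrm{link}_\Delta\sigma}$ associated to $\mathrm{link}_\Delta\sigma$, regarded as a simplicial complex on the vertex set $\bar\sigma$ (so the arrangement lives in $\mathbb{R}^{\bar\sigma}$).
   Context: For a finite set $V$ and $S\subseteq V$, $U_S=\{u\in\mathbb{R}^V:u_i=u_j\ \forall i,j\in S\}$. For a simplicial complex $\Gamma$ on $V$, $\mathcal{A}_\Gamma=\{U_{V-F}:F\text{ facet of }\Gamma\}$ and its intersection lattice is the set of all intersections of members of $\mathcal{A}_\Gamma$ (including $\mathbb{R}^V$), ordered by reverse inclusion; $L_\Delta$ is this lattice for $\Delta$ on $[n]$. $\mathrm{link}_\Delta\sigma=\{\tau\in\Delta:\tau\cap\sigma=\emptyset,\ \tau\cup\sigma\in\Delta\}$. *)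

(* Defs.v *)
From Stdlib Require Import Rdefinitions.
From mathcomp Require Import all_boot.

Set Implicit Arguments.
Unset Strict Implicit.
Unset Printing Implicit Defensive.

Definition vset (V : Type) := (V -> R) -> Prop.

Definition is_complex (V : finType) (D : {set {set V}}) : Prop :=
  forall F G : {set V}, F \in D -> G \subset F -> G \in D.

Definition facet (V : finType) (D : {set {set V}}) (F : {set V}) : Prop :=
  F \in D /\ forall G : {set V}, G \in D -> F \subset G -> G = F.

Definition U (V : finType) (S : {set V}) : vset V :=
  fun u => forall i j, i \in S -> j \in S -> u i = u j.

(* Membership in the intersection lattice of A_D = { U_{V - F} : F facet of D }:
   X is the intersection of the subspaces U_{V-F} over some set Fs of facets
   (Fs = set0 gives R^V). *)
Definition in_L (V : finType) (D : {set {set V}}) (X : vset V) : Prop :=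
  exists Fs : {set {set V}},
    (forall F, F \in Fs -> facet D F) /\
    X = (fun u => forall F, F \in Fs -> U (~: F) u).

(* order of the intersection lattice: reverse inclusion *)
Definition Lle (V : Type) (X Y : vset V) : Prop := forall u, Y u -> X u.

Definition link (V : finType) (D : {set {set V}}) (s : {set V}) : {set {set V}} :=
  [set t : {set V} | [disjoint t & s] && (t :|: s \in D)].

Definition cvert (V : finType) (s : {set V}) : finType := {x : V | x \notin s}.

Definition link_on (V : finType) (D : {set {set V}}) (s : {set V})
  : {set {set cvert s}} :=
  [set t : {set cvert s} | [set val x | x in t] \in link D s].

(* Main.v *)
Require Import Defs.
From Stdlib Require Import Rdefinitions.
From mathcomp Require Import all_boot.
From mathcomp Require Import zify.
From Stdlib Require RIneq FunctionalExtensionality PropExtensionality.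

Set Implicit Arguments.
Unset Strict Implicit.
Definition capU (W : finType) (Fs : {set {set W}}) : vset W :=
  fun u => forall F, F \in Fs -> U (~: F) u.

Section Aux.
Variable V : finType.
Variable s : {set V}.


Definition ext (w : cvert s -> R) (i : V) : R :=
  match insub i with Some x => w x | None => R0 end.

Definition restr (u : V -> R) : cvert s -> R := fun x => u (val x).

Definition pre (F : {set V}) : {set cvert s} := [set x | val x \in F].

Definition up (G : {set cvert s}) : {set V} := [set val x | x in G] :|: s.

Lemma ext_val w (x : cvert s) : ext w (val x) = w x.
Proof.
rewrite /ext; case: insubP => [y _ /val_inj -> //|].
by rewrite (valP x).
Qed.

Lemma ext_restr (u : V -> R) (i : V) : i \notin s -> ext (restr u) i = u i.
Proof.
move=> H; rewrite /ext; case: insubP => [y _ <- //|].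
by rewrite H.
Qed.

Lemma notin_val (i : V) : i \notin s -> exists x : cvert s, i = val x.
Proof. by move=> H; exists (exist _ i H). Qed.

Lemma capU_ext (Fs : {set {set V}}) (u : V -> R) : (forall F, F \in Fs -> s \subset F) ->
  capU Fs u <-> capU Fs (ext (restr u)).
Proof.
move=> Hs; split=> H F HF i j Hi Hj.
- have Hi' : i \notin s.
    by apply/negP => /(subsetP (Hs F HF)) Hc; move: Hi; rewrite in_setC Hc.
  have Hj' : j \notin s.
    by apply/negP => /(subsetP (Hs F HF)) Hc; move: Hj; rewrite in_setC Hc.
  by rewrite (ext_restr u Hi') (ext_restr u Hj'); exact: (H F HF i j Hi Hj).
- have Hi' : i \notin s.
    by apply/negP => /(subsetP (Hs F HF)) Hc; move: Hi; rewrite in_setC Hc.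
  have Hj' : j \notin s.
    by apply/negP => /(subsetP (Hs F HF)) Hc; move: Hj; rewrite in_setC Hc.
  by rewrite -(ext_restr u Hi') -(ext_restr u Hj'); exact: (H F HF i j Hi Hj).
Qed.

Lemma capU_link (Fs : {set {set V}}) (w : cvert s -> R) : (forall F, F \in Fs -> s \subset F) ->
  capU Fs (ext w) <-> capU (pre @: Fs) w.
Proof.
move=> Hs; split=> H.
- move=> G /imsetP [F HF ->] x y Hx Hy.
  rewrite -!ext_val; apply: (H F HF); rewrite in_setC.
  + by move: Hx; rewrite in_setC inE.
  + by move: Hy; rewrite in_setC inE.
- move=> F HF i j Hi Hj.
  have Hi' : i \notin s.
    by apply/negP => /(subsetP (Hs F HF)) Hc; move: Hi; rewrite in_setC Hc.
  have Hj' : j \notin s.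
    by apply/negP => /(subsetP (Hs F HF)) Hc; move: Hj; rewrite in_setC Hc.
  have [x Ex] := notin_val Hi'; have [y Ey] := notin_val Hj'; subst i j.
  rewrite !ext_val; apply: (H (pre F)); first exact: imset_f.
  + by rewrite in_setC inE -in_setC.
  + by rewrite in_setC inE -in_setC.
Qed.
Lemma mem_val (G : {set cvert s}) (x : cvert s) :
  (val x \in [set val y | y in G]) = (x \in G).
Proof. exact: mem_imset val_inj. Qed.

Lemma val_pre (F : {set V}) : [set val x | x in pre F] = F :\: s.
Proof.
apply/setP=> i; rewrite !inE; apply/imsetP/andP.
- by move=> [x Hx ->]; rewrite inE in Hx; rewrite Hx (valP x).
- by move=> [Hi HF]; exists (exist _ i Hi); rewrite ?inE.
Qed.

Lemma pre_up (G : {set cvert s}) : pre (up G) = G.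
Proof.
apply/setP=> x; rewrite /pre /up !inE mem_val.
by rewrite (negbTE (valP x)) orbF.
Qed.

Variable D : {set {set V}}.

Lemma pre_in_link (F : {set V}) : F \in D -> s \subset F -> pre F \in link_on D s.
Proof.
move=> HF Hs; rewrite /link_on inE /link inE val_pre; apply/andP; split.
- by rewrite disjoints_subset; apply/subsetP=> i; rewrite !inE; case/andP.
- have -> : (F :\: s) :|: s = F.
    apply/setP=> i; rewrite !inE; case Is: (i \in s) => /=.
    + by rewrite ?orbT (subsetP Hs _ Is).
    + by rewrite orbF.
  exact: HF.
Qed.

Lemma facet_pre (F : {set V}) : facet D F -> s \subset F -> facet (link_on D s) (pre F).
Proof.
move=> [HFD HFm] Hs; split; first exact: pre_in_link.
move=> H HH Hsub.
move: HH; rewrite /link_on inE /link inE => /andP [_ HHD].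
have E : [set val x | x in H] :|: s = F.
  apply: HFm => //; apply/subsetP=> i Hi.
  case: (boolP (i \in s)) => Is; rewrite inE ?Is ?orbT //.
  have [x Ex] := notin_val Is; subst i.
  by rewrite (negbTE Is) orbF mem_val; apply: (subsetP Hsub); rewrite inE.
apply/setP/subset_eqP/andP; split=> //; apply/subsetP=> x Hx.
by rewrite inE -E inE mem_val Hx.
Qed.

Lemma facet_up (G : {set cvert s}) : facet (link_on D s) G -> facet D (up G).
Proof.
move=> [HG Hm]; have HG' := HG.
move: HG'; rewrite /link_on inE /link inE => /andP [_ HGD].
split; first exact: HGD.
move=> H HH Hsub.
have Hs : s \subset H by apply: subset_trans (subsetUr _ _) Hsub.
have E : pre H = G.
  apply: Hm; first exact: pre_in_link.
  by apply/subsetP=> x Hx; rewrite inE; apply: (subsetP Hsub); rewrite /up inE mem_val Hx.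
apply/setP/subset_eqP/andP; split=> //; apply/subsetP=> i Hi.
rewrite /up inE; case: (boolP (i \in s)) => Is; rewrite ?orbT //.
have [x Ex] := notin_val Is; subst i.
by rewrite orbF mem_val -E inE.
Qed.

Lemma sub_of_U (F : {set V}) : #|F| + 2 <= #|V| ->
  (forall u, U (~: s) u -> U (~: F) u) -> s \subset F.
Proof.
move=> Hc HU; apply/subsetP=> i Is; apply/negPn/negP => Hi.
have : 0 < #|~: F :\ i|.
  have := cardsD1 i (~: F); rewrite in_setC Hi /=.
  have := cardsCs F; lia.
rewrite card_gt0 => /set0Pn [j]; rewrite !inE => /andP [Hji Hj].
pose u := fun x : V => if x == i then R1 else R0.
have : u i = u j.
  apply: (HU u); last by rewrite inE.
  + move=> a b Ha Hb; rewrite /u.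
    have /negbTE -> : a != i by apply/eqP => E; move: Ha; rewrite E inE Is.
    have /negbTE -> : b != i by apply/eqP => E; move: Hb; rewrite E inE Is.
    by [].
  + by rewrite inE.
rewrite /u eqxx (negbTE Hji) => E; exact: Raxioms.R1_neq_R0 E.
Qed.

End Aux.

Theorem lemma4p5 (n : nat) (D : {set {set 'I_n}}) (s : {set 'I_n}) :
  is_complex D ->
  (* dim D <= n - 3, i.e. every face F has |F| - 1 <= n - 3 *)
  (forall F, F \in D -> #|F| + 2 <= n) ->
  s \in D ->
  in_L D (U (~: s)) ->
  (* the lower interval [0^, U_{sbar}] of L_D is isomorphic to L_{A_{link_D s}} *)
  exists f : vset 'I_n -> vset (cvert s),
    (forall X, in_L D X -> Lle X (U (~: s)) -> in_L (link_on D s) (f X)) /\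
    (forall Y, in_L (link_on D s) Y ->
       exists X, [/\ in_L D X, Lle X (U (~: s)) & f X = Y]) /\
    (forall X Y, in_L D X -> Lle X (U (~: s)) ->
                 in_L D Y -> Lle Y (U (~: s)) -> f X = f Y -> X = Y) /\
    (forall X Y, in_L D X -> Lle X (U (~: s)) ->
                 in_L D Y -> Lle Y (U (~: s)) ->
                 (Lle X Y <-> Lle (f X) (f Y))).
Proof.
move=> Hcx Hdim HsD _.
have cardV : #|'I_n| = n := card_ord n.
have key : forall X, in_L D X -> Lle X (U (~: s)) ->
    exists Fs : {set {set 'I_n}}, [/\ (forall F, F \in Fs -> facet D F),
      (forall F, F \in Fs -> s \subset F) & X = capU Fs].
  move=> X [Fs [HF ->]] HL; exists Fs; split=> // F HFs.
  apply: sub_of_U; first by rewrite cardV; exact: Hdim (HF F HFs).1.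
  by move=> u Hu; exact: HL u Hu F HFs.
have ord : forall X Y, in_L D X -> Lle X (U (~: s)) ->
                 in_L D Y -> Lle Y (U (~: s)) ->
                 (Lle X Y <-> Lle (fun w => X (@ext _ s w)) (fun w => Y (@ext _ s w))).
  move=> X Y HX HLX HY HLY.
  have [Fs [_ Hs ->]] := key X HX HLX; have [Gs [_ Ht ->]] := key Y HY HLY.
  split.
  - by move=> HXY w Hw; exact: HXY _ Hw.
  - move=> H u Hu; apply: (proj2 (capU_ext u Hs)); apply: H; exact: (proj1 (capU_ext u Ht)).
exists (fun X w => X (@ext _ s w)).
split.
  move=> X HX HL; have [Fs [HF Hs ->]] := key X HX HL.
  exists (@pre _ s @: Fs); split.
    by move=> G /imsetP [F HFs ->]; apply: facet_pre; [exact: HF|exact: Hs].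
  apply: FunctionalExtensionality.functional_extensionality => w.
  apply: PropExtensionality.propositional_extensionality; exact: capU_link.
split.
  move=> Y [Gs [HG ->]]; exists (capU (@up _ s @: Gs)); split.
  - exists (@up _ s @: Gs); split => //.
    by move=> F /imsetP [G HGs ->]; apply: facet_up; exact: HG.
  - move=> u Hu F /imsetP [G _ ->] i j Hi Hj; apply: Hu.
    + by move: Hi; rewrite !inE negb_or => /andP [].
    + by move: Hj; rewrite !inE negb_or => /andP [].
  - apply: FunctionalExtensionality.functional_extensionality => w.
    apply: PropExtensionality.propositional_extensionality.
    have E : @pre _ s @: (@up _ s @: Gs) = Gs.
      by rewrite -imset_comp (eq_imset _ (@pre_up _ s)) imset_id.
    have := @capU_link _ s (@up _ s @: Gs) w; rewrite E; apply.
    by move=> F /imsetP [G _ ->]; exact: subsetUr.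
split; last exact: ord.
move=> X Y HX HLX HY HLY E.
have EE : forall w, X (@ext _ s w) = Y (@ext _ s w) := fun w => f_equal (fun g => g w) E.
have h1 : Lle X Y by apply/ord => // w; rewrite EE.
have h2 : Lle Y X by apply/ord => // w; rewrite EE.
apply: FunctionalExtensionality.functional_extensionality => u.
apply: PropExtensionality.propositional_extensionality; split; [exact: h2|exact: h1].
Qed.
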